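(* Let $X=\bigcup_{n\ge1}X_n$ be a positively graded set. The space $K[T_{\infty,X}]=\bigoplus_{n\ge1}K[T_{n,X}]$ of planar rooted trees with vertices coloured by $X$, with the operations $t\bullet_iw:=t\circ_iw$ (grafting), is a grafting algebra, and it is the free grafting algebra on $X$: for every grafting algebra $A$ and every map $\varphi:X\to A$ with $\varphi(X_n)\subseteq A_n$, there is a unique degree-preserving linear map $\Phi:K[T_{\infty,X}]\to A$ with $\Phi(t\circ_iw)=\Phi(t)\bullet_i\Phi(w)$ for all $t,w$ and $0\le i\le|w|$, and $\Phi(\mathfrak c_n,x)=\varphi(x)$ for $x\in X_n$. In particular the free grafting algebra on one generator of degree $1$ is spanned by planar binary rooted trees.
   Context: A preshuffle algebra is a graded vector space $A=\bigoplus_{n\ge0}A_n$ over a field $K$ with linear maps $\bullet_i:A_n\otimes A_m\to A_{n+m}$ for all $n,m\ge0$ and $0\le i\le m$, such that $(x\bullet_iy)\bullet_jz=x\bullet_{i+j}(y\bullet_jz)$ for all homogeneous $x,y,z$, $0\le i\le|y|$, $0\le j\le|z|$. A grafting algebra is a preshuffle algebra which moreover satisfies $x\bullet_i(y\bullet_jz)=y\bullet_{j+|x|}(x\bullet_iz)$ for all homogeneous $x,y,z$ and $0\le i<j\le|z|$. A planar rooted tree is a planar tree with a root, in which every internal vertex has at least two incoming edges and one outgoing edge; the leaves of a tree with $n+1$ leaves are numbered $0,\dots,n$ from left to right, and the tree has degree $n$ ($n\ge1$). $T_{n,X}$ is the set of planar rooted trees with $n+1$ leaves whose internal vertices are coloured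 by elements of $X$ so that a vertex with $k+1$ incoming edges is coloured by an element of $X_k$. For coloured trees $t,w$ and $0\le i\le|w|$, $t\circ_iw$ is the coloured tree obtained by attaching the root of $t$ to the $i$-th leaf of $w$; it has degree $|t|+|w|$. $(\mathfrak c_n,x)$ denotes the corolla with $n+1$ leaves and one vertex, coloured by $x\in X_n$. *)

(* Defs.v *)
From HB Require Import structures.
From mathcomp Require Import all_boot all_algebra.
From mathcomp.multinomials Require Import freeg.

Set Implicit Arguments.
Unset Strict Implicit.
Unset Printing Implicit Defensive.

Import GRing.Theory.
Local Open Scope ring_scope.

(* A family of products  x \bullet_i y  (x in A_n, y in A_m, result in
   A_{n+m}) is encoded as  op n m i x y.  Only 0 <= i <= m matters. *)
Definition bullet (K : fieldType) (A : nat -> lmodType K) :=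
  forall n m : nat, nat -> A n -> A m -> A (n + m)%N.

Definition bullet_bilinear (K : fieldType) (A : nat -> lmodType K)
    (op : bullet A) :=
  forall (n m i : nat), (i <= m)%N ->
    (forall (a : K) (x1 x2 : A n) (y : A m),
        op n m i (a *: x1 + x2) y = a *: op n m i x1 y + op n m i x2 y) /\
    (forall (a : K) (x : A n) (y1 y2 : A m),
        op n m i x (a *: y1 + y2) = a *: op n m i x y1 + op n m i x y2).

Definition preshuffle_axiom (K : fieldType) (A : nat -> lmodType K)
    (op : bullet A) :=
  forall (n m p : nat) (x : A n) (y : A m) (z : A p) (i j : nat),
    (i <= m)%N -> (j <= p)%N ->
    op (n + m)%N p j (op n m i x y) z
    = ecast k (A k) (addnA n m p) (op n (m + p)%N (i + j)%N x (op m p j y z)).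

Definition grafting_axiom (K : fieldType) (A : nat -> lmodType K)
    (op : bullet A) :=
  forall (n m p : nat) (x : A n) (y : A m) (z : A p) (i j : nat),
    (i < j)%N -> (j <= p)%N ->
    op n (m + p)%N i x (op m p j y z)
    = ecast k (A k) (addnCA m n p) (op m (n + p)%N (j + n)%N y (op n p i x z)).

Definition preshuffle_algebra (K : fieldType) (A : nat -> lmodType K)
    (op : bullet A) :=
  bullet_bilinear op /\ preshuffle_axiom op.

Definition grafting_algebra (K : fieldType) (A : nat -> lmodType K)
    (op : bullet A) :=
  preshuffle_algebra op /\ grafting_axiom op.

Definition is_linear (K : fieldType) (U V : lmodType K) (f : U -> V) :=
  forall (a : K) (u v : U), f (a *: u + v) = a *: f u + f v.

Section Trees.
(* X : positively graded set; X k is the set of colours for vertices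
   with k+1 incoming edges.  X 0 is never used. *)
Variable X : nat -> choiceType.

Definition colour := {k : nat & X k}.

(* Leaf = the trivial tree (a single edge);
   Node c ch = a root vertex coloured by c, whose incoming edges carry
   the subtrees ch, listed from left to right. *)
Inductive tree : Type :=
  | Leaf : tree
  | Node : colour -> seq tree -> tree.

Fixpoint leaves (t : tree) : nat :=
  match t with
  | Leaf => 1
  | Node _ ch => sumn (map leaves ch)
  end.

Fixpoint wf (t : tree) : bool :=
  match t with
  | Leaf => true
  | Node c ch => (0 < tag c)%N && (size ch == (tag c).+1) && all wf ch
  end.

Definition isnode (t : tree) : bool :=
  if t is Node _ _ then true else false.

(* t is a planar rooted X-coloured tree with n+1 leaves (degree n);
   the trivial tree is excluded, so T_0 is empty *)
Definition inT (n : nat) (t : tree) : bool :=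
  [&& wf t, isnode t & leaves t == n.+1].

(* t \circ_i w : graft the root of t onto the i-th leaf of w
   (leaves numbered from 0, left to right) *)
Fixpoint graft (t : tree) (i : nat) (w : tree) : tree :=
  match w with
  | Leaf => if i == 0%N then t else Leaf
  | Node c ch =>
      Node c ((fix gl (i : nat) (s : seq tree) : seq tree :=
                 match s with
                 | [::] => [::]
                 | u :: s' => if (i < leaves u)%N then graft t i u :: s'
                              else u :: gl (i - leaves u)%N s'
                 end) i ch)
  end.

Definition corolla (n : nat) (x : X n) : tree :=
  Node (Tagged X x) (nseq n.+1 Leaf).

Fixpoint binary (t : tree) : bool :=
  match t with
  | Leaf => true
  | Node _ ch => (size ch == 2) && all binary ch
  end.

Fixpoint enc (t : tree) : GenTree.tree (option colour) :=
  match t with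
  | Leaf => GenTree.Leaf None
  | Node c ch => GenTree.Node 0 (GenTree.Leaf (Some c) :: map enc ch)
  end.

Fixpoint dec (g : GenTree.tree (option colour)) : option tree :=
  match g with
  | GenTree.Leaf None => Some Leaf
  | GenTree.Node _ (GenTree.Leaf (Some c) :: gs) => Some (Node c (pmap dec gs))
  | _ => None
  end.

Fixpoint encK (t : tree) : dec (enc t) = Some t :=
  match t return dec (enc t) = Some t with
  | Leaf => erefl
  | Node c ch =>
      f_equal (fun s => Some (Node c s))
        ((fix F (s : seq tree) : pmap dec (map enc s) = s :=
            match s return pmap dec (map enc s) = s with
            | [::] => erefl
            | u :: s' =>
                @eq_ind_r _ (Some u)
                  (fun o => match o with Some y => y :: pmap dec (map enc s')
                                       | None => pmap dec (map enc s') end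
                            = u :: s')
                  (f_equal (cons u) (F s')) (dec (enc u)) (encK u)
            end) ch)
  end.

HB.instance Definition _ := Choice.copy tree (pcan_type encK).

Definition T (n : nat) := {t : tree | inT n t}.

End Trees.

Arguments Leaf {X}.

Section FreeGrafting.
Variables (K : fieldType) (X : nat -> choiceType).

Definition KT (n : nat) : lmodType K := {freeg (T X n) / K}.

Definition basis (n : nat) (t : T X n) : KT n := Freeg [:: ((1 : K), t)].

Definition tvec (n : nat) (t : tree X) : KT n :=
  match @insub _ _ (T X n) t with
  | Some s => basis s
  | None => 0
  end.

Definition graftKT : bullet KT :=
  fun n m i (x : KT n) (y : KT m) =>
    fglift (fun t : T X n =>
              fglift (fun w : T X m => tvec (n + m) (graft (val t) i (val w))) y) x.

End FreeGrafting.

Definition Xone (k : nat) : choiceType :=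
  if k == 1%N then (unit : choiceType) else (void : choiceType).

Arguments KT K X n : clear implicits.
Arguments basis {K X n} t.
Arguments tvec K {X} n t.
Arguments graftKT K X : clear implicits.
Arguments corolla {X n} x.

(* Main.v *)
Require Import Defs.
From HB Require Import structures.
From mathcomp Require Import all_boot all_algebra.
From mathcomp.multinomials Require Import freeg.
From mathcomp Require Import zify.
Import GRing.Theory.
Local Open Scope ring_scope.

Set Implicit Arguments.
Unset Strict Implicit.

Section TreeLemmas.
Variable X : nat -> choiceType.
Implicit Types (t u w s : tree X) (ch : seq (tree X)).

Fixpoint tree_ind2 (P : tree X -> Prop) (HL : P Leaf)
  (HN : forall c ch, foldr (fun s acc => P s /\ acc) True ch -> P (Node c ch))
  t : P t :=
  match t with
  | Leaf => HL
  | Node c ch => HN c ch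
     ((fix F (s : seq (tree X)) : foldr (fun s acc => P s /\ acc) True s :=
        match s return foldr (fun s acc => P s /\ acc) True s with [::] => I | u :: s' => conj (@tree_ind2 P HL HN u) (F s') end) ch)
  end.

Section GL.
Variable t : tree X.
Fixpoint gl (i : nat) (s : seq (tree X)) : seq (tree X) :=
  match s with
  | [::] => [::]
  | u :: s' => if (i < leaves u)%N then graft t i u :: s'
               else u :: gl (i - leaves u)%N s'
  end.
End GL.

Lemma graft_node t i c ch : graft t i (Node c ch) = Node c (gl t i ch).
Proof. reflexivity. Qed.

Lemma graft_leaf t i : graft t i Leaf = if i == 0%N then t else Leaf.
Proof. reflexivity. Qed.

Lemma leaves_graft w t i : (i < leaves w)%N ->
  leaves (graft t i w) = (leaves t + leaves w - 1)%N.
Proof.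
elim/tree_ind2: w i => [|c ch IH] i /=.
  by case: i => // _; rewrite addnK.
elim: ch IH i => [|s ch IHl] //= [IHs IHch] i Hi.
case: ifP => H /=.
  by rewrite IHs //; lia.
rewrite IHl //; lia.
Qed.

Lemma size_gl t i ch : size (gl t i ch) = size ch.
Proof. by elim: ch i => //= s ch IH i; case: ifP => //= _; rewrite IH. Qed.

Lemma wf_graft t w i : wf t -> wf w -> wf (graft t i w).
Proof.
move=> wt; elim/tree_ind2: w i => [|c ch IH] i /=.
  by case: (i == 0%N).
rewrite size_gl => /andP [-> ach] /=.
elim: ch IH i ach => [|s ch IHl] //= [IHs IHch] i /andP [ws wch].
case: ifP => _ /=; first by rewrite IHs ?wch.
by rewrite ws IHl.
Qed.

Lemma leaves_pos t : wf t -> (0 < leaves t)%N.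
Proof.
elim/tree_ind2: t => [|c ch IH] //= /andP [/andP [_ /eqP sz] ach].
case: ch sz IH ach => [|s ch] //= _ [IHs _] /andP [ws _].
have := IHs ws; lia.
Qed.

Lemma graftA w t u i j : (i < leaves u)%N -> (j < leaves w)%N ->
  graft (graft t i u) j w = graft t (i + j) (graft u j w).
Proof.
move=> Hi; elim/tree_ind2: w j => [|c ch IH] j.
  by case: j => //= _; rewrite addn0.
rewrite !graft_node /= => Hj; congr Node.
elim: ch IH j Hj => [|s ch IHl] //= [IHs IHch] j Hj.
case: ifP => H /=.
  rewrite leaves_graft // ifT; last by lia.
  by rewrite IHs.
rewrite ifF; last by lia.
rewrite (IHl IHch); last by lia.
by congr (_ :: gl _ _ _); lia.
Qed.

Lemma graftC w t u i j : (0 < leaves t)%N -> (i < j)%N -> (j < leaves w)%N ->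
  graft t i (graft u j w) = graft u (j + leaves t - 1) (graft t i w).
Proof.
move=> Ht; elim/tree_ind2: w i j => [|c ch IH] i j.
  by case: j => //; case: i.
rewrite !graft_node /= => Hij Hj; congr Node.
elim: ch IH i j Hij Hj => [|s ch IHl] //= [IHs IHch] i j Hij Hj.
case: (ltnP j (leaves s)) => H1 /=.
  rewrite leaves_graft //.
  have -> : (i < leaves u + leaves s - 1)%N = true by lia.
  have -> : (i < leaves s)%N = true by lia.
  rewrite /= leaves_graft; last by lia.
  have -> : (j + leaves t - 1 < leaves t + leaves s - 1)%N = true by lia.
  by rewrite IHs.
case: (ltnP i (leaves s)) => H2 /=.
  rewrite leaves_graft // ifF; last by lia.
  by congr (_ :: gl _ _ _); lia.
rewrite ifF; last by lia.
rewrite (IHl IHch); try lia.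
by congr (_ :: gl _ _ _); lia.
Qed.

Lemma inT_graft n m i t w : inT n t -> inT m w -> (i <= m)%N ->
  inT (n + m) (graft t i w).
Proof.
rewrite /inT => /and3P [wt nt /eqP lt] /and3P [ww nw /eqP lw] Him.
rewrite wf_graft //= leaves_graft; last by lia.
apply/andP; split; last by apply/eqP; lia.
by case: w nw {ww lw}.
Qed.

End TreeLemmas.

Set Implicit Arguments.
Unset Strict Implicit.

Section FreegLemmas.
Variables (K : fieldType) (T : choiceType).

Lemma lin_add (V W : lmodType K) (f : V -> W) : is_linear f ->
  (f 0 = 0) /\ (forall x y, f (x + y) = f x + f y) /\ (forall a x, f (a *: x) = a *: f x).
Proof.
move=> lf.
have f0 : f 0 = 0.
  have := lf 1 0 0; rewrite scale1r addr0 scale1r => h.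
  by apply: (addrI (f 0)); rewrite -h addr0.
split=> //; split=> [x y|a x].
  by have := lf 1 x y; rewrite !scale1r.
by rewrite -[a *: x]addr0 lf f0 addr0.
Qed.

Lemma lin_sum (V W : lmodType K) (f : V -> W) (I : Type) (r : seq I) (F : I -> V) :
  is_linear f -> f (\sum_(i <- r) F i) = \sum_(i <- r) f (F i).
Proof.
move=> /lin_add [f0 [fD _]].
elim: r => [|a r IH]; first by rewrite !big_nil.
by rewrite !big_cons fD IH.
Qed.

Lemma freegZU (a k : K) (z : T) : a *: << k *g z >> = << (a * k) *g z >> :> {freeg T / K}.
Proof. by apply/eqP/freeg_eqP => y; rewrite coeffZ !coeffU mulrA. Qed.

Lemma freeg_decomp (D : {freeg T / K}) :
  D = \sum_(z <- dom D) coeff z D *: << z >>.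
Proof.
rewrite -{1}(freeg_sumE D); apply: eq_bigr => z _.
by rewrite freegZU mulr1.
Qed.

Lemma fglift_add (V : lmodType K) (f : T -> V) (x y : {freeg T / K}) :
  fglift f (x + y) = fglift f x + fglift f y.
Proof.
have h := lift_is_additive f.
have f0 : fglift f 0 = 0 by rewrite -(subrr 0) h subrr.
have fN z : fglift f (- z) = - fglift f z by rewrite -sub0r h f0 sub0r.
by rewrite -{1}[y]opprK h fN opprK.
Qed.

Lemma fglift_sum0 (V : lmodType K) (f : T -> V) (I : Type) (r : seq I) (F : I -> {freeg T / K}) :
  fglift f (\sum_(i <- r) F i) = \sum_(i <- r) fglift f (F i).
Proof.
elim: r => [|a r IH].
  rewrite !big_nil; have h := lift_is_additive f.
  by rewrite -(subrr 0) h subrr.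
by rewrite !big_cons fglift_add IH.
Qed.

Lemma fgliftE (V : lmodType K) (f : T -> V) (x : {freeg T / K}) :
  fglift f x = \sum_(z <- dom x) coeff z x *: f z.
Proof.
rewrite -{1}(freeg_sumE x) fglift_sum0; apply: eq_bigr => z _.
by rewrite liftU.
Qed.

Lemma fglift_lin (V : lmodType K) (f : T -> V) : is_linear (fglift f).
Proof.
move=> a u v; rewrite fglift_add; congr (_ + _).
rewrite -{1}(freeg_sumE u) scaler_sumr fglift_sum0 fgliftE scaler_sumr.
apply: eq_bigr => z _; by rewrite freegZU liftU scalerA.
Qed.

Lemma fglift_linf (V : lmodType K) (a : K) (f g : T -> V) (x : {freeg T / K}) :
  fglift (fun t => a *: f t + g t) x = a *: fglift f x + fglift g x.
Proof.
rewrite !fgliftE scaler_sumr -big_split /=; apply: eq_bigr => z _.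
by rewrite scalerDr !scalerA mulrC.
Qed.

Lemma fglift_basis (V : lmodType K) (f : T -> V) (t : T) :
  fglift f << t >> = f t.
Proof. by rewrite liftU scale1r. Qed.

Lemma lin_basis_eq (V : lmodType K) (f g : {freeg T / K} -> V) :
  is_linear f -> is_linear g -> (forall t, f << t >> = g << t >>) ->
  forall x, f x = g x.
Proof.
move=> lf lg h x; rewrite (freeg_decomp x) (lin_sum _ _ lf) (lin_sum _ _ lg).
apply: eq_bigr => z _.
have [_ [_ fZ]] := lin_add lf; have [_ [_ gZ]] := lin_add lg.
by rewrite fZ gZ h.
Qed.

End FreegLemmas.

Set Implicit Arguments.
Unset Strict Implicit.

Section KTLemmas.
Variables (K : fieldType) (X : nat -> choiceType).

Lemma tvec_in n (s : tree X) (h : inT n s) :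
  tvec K n s = basis (exist (fun t => inT n t) s h).
Proof.
rewrite /tvec; case: insubP => [u _ e|]; last by rewrite h.
by congr basis; apply: val_inj; rewrite e.
Qed.

Lemma tvecE n (t : T X n) : tvec K n (val t) = basis t.
Proof. by rewrite /tvec valK. Qed.

Lemma ecast_tvec n n' (e : n = n') (s : tree X) :
  ecast k (KT K X k) e (tvec K n s) = tvec K n' s.
Proof. by case: n' / e. Qed.

Lemma ecast_lin n n' (e : n = n') (a : K) (u v : KT K X n) :
  ecast k (KT K X k) e (a *: u + v) = a *: ecast k (KT K X k) e u + ecast k (KT K X k) e v.
Proof. by case: n' / e. Qed.

Lemma graftKT_basis n m i (t : T X n) (w : T X m) :
  graftKT K X n m i (basis t) (basis w) = tvec K (n + m) (graft (val t) i (val w)).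
Proof. by rewrite /graftKT !fglift_basis. Qed.

Lemma eq_fglift (T0 : choiceType) (V : lmodType K) (f g : T0 -> V) x :
  f =1 g -> fglift f x = fglift g x.
Proof. by move=> e; rewrite !fgliftE; apply: eq_bigr => z _; rewrite e. Qed.

Lemma graftKT_Dl n m i a (x1 x2 : KT K X n) (y : KT K X m) :
  graftKT K X n m i (a *: x1 + x2) y = a *: graftKT K X n m i x1 y + graftKT K X n m i x2 y.
Proof. exact: fglift_lin. Qed.

Lemma graftKT_Dr n m i a (x : KT K X n) (y1 y2 : KT K X m) :
  graftKT K X n m i x (a *: y1 + y2) = a *: graftKT K X n m i x y1 + graftKT K X n m i x y2.
Proof.
rewrite /graftKT -fglift_linf; apply: eq_fglift => t.
exact: fglift_lin.
Qed.

Lemma KT_bilinear : bullet_bilinear (graftKT K X).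
Proof.
move=> n m i _; split; [exact: graftKT_Dl | exact: graftKT_Dr].
Qed.

Lemma KT_preshuffle : preshuffle_axiom (graftKT K X).
Proof.
move=> n m p x y z i j Hi Hj.
move: x; apply: lin_basis_eq.
- by move=> a u v; rewrite !graftKT_Dl.
- by move=> a u v; rewrite graftKT_Dl ecast_lin.
move=> t; move: y; apply: lin_basis_eq.
- by move=> a u v; rewrite graftKT_Dr graftKT_Dl.
- by move=> a u v; rewrite graftKT_Dl graftKT_Dr ecast_lin.
move=> u; move: z; apply: lin_basis_eq.
- by move=> a v1 v2; rewrite graftKT_Dr.
- by move=> a v1 v2; rewrite graftKT_Dr graftKT_Dr ecast_lin.
move=> w.
have ht := valP t; have hu := valP u; have hw := valP w.
rewrite graftKT_basis (tvec_in (inT_graft ht hu Hi)) graftKT_basis.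
rewrite graftKT_basis (tvec_in (inT_graft hu hw Hj)) graftKT_basis /=.
rewrite ecast_tvec graftA //.
- move: hu; rewrite /inT => /and3P [_ _ /eqP ->]; lia.
- move: hw; rewrite /inT => /and3P [_ _ /eqP ->]; lia.
Qed.

Lemma KT_grafting : grafting_axiom (graftKT K X).
Proof.
move=> n m p x y z i j Hi Hj.
move: x; apply: lin_basis_eq.
- by move=> a u v; rewrite !graftKT_Dl.
- by move=> a u v; rewrite graftKT_Dl graftKT_Dr ecast_lin.
move=> t; move: y; apply: lin_basis_eq.
- by move=> a u v; rewrite graftKT_Dl graftKT_Dr.
- by move=> a u v; rewrite graftKT_Dl ecast_lin.
move=> u; move: z; apply: lin_basis_eq.
- by move=> a v1 v2; rewrite graftKT_Dr graftKT_Dr.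
- by move=> a v1 v2; rewrite graftKT_Dr graftKT_Dr ecast_lin.
move=> w.
have ht := valP t; have hu := valP u; have hw := valP w.
rewrite graftKT_basis (tvec_in (inT_graft hu hw Hj)) graftKT_basis /=.
rewrite graftKT_basis (tvec_in (inT_graft ht hw (ltnW (leq_trans Hi Hj)))) graftKT_basis /=.
rewrite ecast_tvec.
move: ht hw; rewrite /inT => /and3P [_ _ /eqP lt] /and3P [_ _ /eqP lw].
have lt' : leaves (sval t) = n.+1 by exact: lt.
have lw' : leaves (sval w) = p.+1 by exact: lw.
rewrite graftC; [|by rewrite lt'|done|by rewrite lw'; lia].
by rewrite lt' addnS subn1.
Qed.

Lemma KT_grafting_algebra : grafting_algebra (graftKT K X).
Proof.
split; [split; [exact: KT_bilinear | exact: KT_preshuffle] | exact: KT_grafting].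
Qed.

End KTLemmas.

Unset Implicit Arguments.
Set Strict Implicit.



Section Free.
Variables (K : fieldType) (X : nat -> choiceType) (A : nat -> lmodType K) (op : bullet A).
Hypothesis Hpre : preshuffle_axiom op.
Hypothesis Hgr : grafting_axiom op.
Variable phi : forall n, X n -> A n.

Definition S := {d : nat & A d}.

Definition sop (a b : S) (i : nat) : S :=
  existT (fun d => A d) (addn (tag a) (tag b)) (op (tag a) (tag b) i (tagged a) (tagged b)).

Lemma existT_ecast n k (e : n = k) (v : A n) :
  existT _ k (ecast k (A k) e v) = existT _ n v :> S.
Proof. by case: k / e. Qed.

Lemma sopA a b c i j : (i <= tag b)%N -> (j <= tag c)%N ->
  sop (sop a b i) c j = sop a (sop b c j) (i + j).
Proof.
case: a b c => [n x] [m y] [p z] /= Hi Hj.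
by rewrite /sop /= Hpre //; apply: existT_ecast.
Qed.

Lemma sopC a b c i j : (i < j)%N -> (j <= tag c)%N ->
  sop a (sop b c j) i = sop b (sop a c i) (j + tag a).
Proof.
case: a b c => [n x] [m y] [p z] /= Hi Hj.
by rewrite /sop /= Hgr //; apply: existT_ecast.
Qed.

Definition castA n (p : S) : A n :=
  match tag p =P n with
  | ReflectT e => ecast k (A k) e (tagged p)
  | ReflectF _ => 0
  end.

Lemma castA_existT n v : castA n (existT _ n v) = v.
Proof. rewrite /castA /=; case: eqP => // e; by rewrite (eq_axiomK e). Qed.

Lemma castA_sop p q n m i : tag p = n -> tag q = m ->
  castA (n + m) (sop p q i) = op n m i (castA n p) (castA m q).
Proof. by case: p q => [n' x] [m' y] /= en em; subst; rewrite /sop /= !castA_existT. Qed.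

Fixpoint comb (j0 : nat) (vs : seq (option S)) (b : S) : S :=
  match vs with
  | [::] => b
  | o :: vs' => let r := comb j0.+1 vs' b in
                match o with None => r | Some g => sop g r j0 end
  end.

Definition base (c : colour X) : S := existT _ (tag c) (phi (tag c) (tagged c)).

Fixpoint G (t : tree X) : S :=
  match t with
  | Leaf => existT (fun d => A d) 0%N (0 : A 0%N)
  | Node c ch => comb 0 (map (fun s => if isnode s then Some (G s) else None) ch) (base c)
  end.

Definition G' (s : tree X) := if isnode s then Some (G s) else None.

Lemma GE c ch : G (Node c ch) = comb 0 (map G' ch) (base c).
Proof. by []. Qed.

Lemma G'_node c ch : G' (Node c ch) = Some (G (Node c ch)). Proof. by []. Qed.
Lemma G'_leaf : G' Leaf = None. Proof. by []. Qed.

Definition tagopt (o : option S) := if o is Some g then tag g else 0%N.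

Lemma tagopt_Some g : tagopt (Some g) = tag g. Proof. by []. Qed.

Lemma tag_comb j0 vs b : tag (comb j0 vs b) = (tag b + sumn (map tagopt vs))%N.
Proof.
elim: vs j0 => [|[g|] vs IH] j0 /=; first by rewrite addn0.
  by rewrite IH; lia.
by rewrite IH.
Qed.

Lemma tag_G t : wf t -> isnode t -> tag (G t) = (leaves t).-1.
Proof.
elim/tree_ind2: t => [|c ch IH] //; rewrite GE /= => /andP [/andP [Hc /eqP Hs] ach] _.
rewrite tag_comb /=.
have : (sumn (map tagopt (map G' ch)) + size ch = sumn (map (@leaves X) ch))%N.
  elim: ch IH ach {Hs} => [|s ch IHl] //= [IHs IHch] /andP [ws wch].
  rewrite -(IHl IHch wch) /G'.
  case: s IHs ws => [|c' ch'] IHs ws /=; first by lia.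
  rewrite IHs //.
  have := leaves_pos ws; simpl; lia.
rewrite Hs; lia.
Qed.

Lemma tag_combG j0 ch b : all (@wf X) ch ->
  (tag (comb j0 (map G' ch) b) + size ch = tag b + sumn (map (@leaves X) ch))%N.
Proof.
rewrite tag_comb; elim: ch => [|s ch IH] /=; first by lia.
move=> /andP [ws wch]; have := IH wch.
case: s ws => [|c' ch'] ws; first by rewrite G'_leaf /=; lia.
rewrite G'_node tagopt_Some tag_G //; have := leaves_pos ws; lia.
Qed.

Section Graft.
Variable t : tree X.
Hypothesis wt : wf t.
Hypothesis nt : isnode t.

Let P (s : tree X) := wf s -> isnode s -> forall i, (i < leaves s)%N ->
  G (graft t i s) = sop (G t) (G s) i.

Lemma comb_gl ch j0 b i : foldr (fun s acc => P s /\ acc) True ch -> all (@wf X) ch ->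
  (j0 + size ch <= tag b + 1)%N -> (i < sumn (map (@leaves X) ch))%N ->
  comb j0 (map G' (gl t i ch)) b = sop (G t) (comb j0 (map G' ch) b) (j0 + i).
Proof.
elim: ch j0 i => [|s ch IHl] //= j0 i [IHs IHch] /andP [ws wch] Hsz Hi.
have Htr := tag_combG j0.+1 ch b wch.
case: ifP => Hil /=.
  case: s IHs ws Hil {Hi} => [|c' ch'] IHs ws Hil.
    by case: i Hil => // _; rewrite /G' /= nt addn0.
  rewrite graft_node G'_node -graft_node IHs // G'_node.
  rewrite sopA; first by rewrite (addnC i).
    by rewrite tag_G //; move: Hil; lia.
  lia.
rewrite (IHl _ _ IHch) //; try lia.
case: s IHs ws Hil Hi => [|c' ch'] IHs ws Hil Hi.
  rewrite /G' /=; congr sop; move: Hil => /=; lia.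
have := leaves_pos ws => Hpos.
rewrite !G'_node sopC; [|lia|lia].
rewrite tag_G //.
congr sop; lia.
Qed.

Lemma G_graft w : wf w -> isnode w -> forall i, (i < leaves w)%N ->
  G (graft t i w) = sop (G t) (G w) i.
Proof.
elim/tree_ind2: w => [|c ch IH] // ws _ i Hi.
move/andP: ws => [/andP [Hc /eqP Hs] ach].
rewrite graft_node !GE (comb_gl ch 0 (base c) i IH) //.
by rewrite Hs /base /=; lia.
Qed.

End Graft.

Lemma inT_tag n s : inT n s -> tag (G s) = n.
Proof. by move=> /and3P [ws ns /eqP ls]; rewrite tag_G // ls. Qed.

Definition Phi n (v : KT K X n) : A n := fglift (fun s : T X n => castA n (G (val s))) v.

Lemma Phi_lin n : is_linear (Phi n).
Proof. exact: fglift_lin. Qed.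

Lemma Phi_basis n (s : T X n) : Phi n (basis s) = castA n (G (val s)).
Proof. exact: fglift_basis. Qed.

Lemma Phi_hom n m i (t : T X n) (w : T X m) : (i <= m)%N ->
  Phi (n + m)%N (tvec K (n + m)%N (graft (val t) i (val w)))
  = op n m i (Phi n (basis t)) (Phi m (basis w)).
Proof.
move=> Him; have ht := valP t; have hw := valP w.
rewrite (tvec_in K (inT_graft ht hw Him)) Phi_basis /= !Phi_basis.
move: (ht) (hw) => /and3P [wt nt /eqP lt] /and3P [ww nw /eqP lw].
rewrite G_graft //; last by rewrite lw.
by apply: castA_sop; apply: inT_tag.
Qed.

Lemma comb_nones j0 k vs b :
  comb j0 (map G' (nseq k Leaf ++ vs)) b = comb (j0 + k) (map G' vs) b.
Proof.
elim: k j0 => [|k IH] j0 /=; first by rewrite addn0.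
by rewrite IH addnS.
Qed.

Lemma leaves_node c l : leaves (Node c l) = sumn (map (@leaves X) l). Proof. by []. Qed.
Lemma sumn_cons1 (a : nat) l : sumn (a :: l) = (a + sumn l)%N. Proof. by []. Qed.

Lemma leaves_nseq j0 vs :
  sumn (map (@leaves X) (nseq j0 Leaf ++ vs)) = (j0 + sumn (map (@leaves X) vs))%N.
Proof. by elim: j0 => //= j0 ->. Qed.

Lemma inT_corolla n (x : X n) : (1 <= n)%N -> inT n (corolla x).
Proof.
move=> Hn; rewrite /inT /corolla /= size_nseq eqxx Hn /=.
have := leaves_nseq n.+1 [::]; rewrite cats0 /= => ->.
rewrite addn0 eqxx andbT.
by rewrite all_nseq orbT.
Qed.

Lemma Phi_corolla n (x : X n) : (1 <= n)%N -> Phi n (tvec K n (corolla x)) = phi n x.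
Proof.
move=> Hn; rewrite (tvec_in K (inT_corolla n x Hn)) Phi_basis.
rewrite GE -[nseq _ _]cats0 comb_nones /=.
exact: castA_existT.
Qed.

Section Unique.
Variable Psi : forall n : nat, KT K X n -> A n.
Hypothesis Psi_lin : forall n, is_linear (Psi n).
Hypothesis Psi_hom : forall (n m i : nat) (t : T X n) (w : T X m), (i <= m)%N ->
  Psi (n + m)%N (tvec K (n + m)%N (graft (val t) i (val w)))
  = op n m i (Psi n (basis t)) (Psi m (basis w)).
Hypothesis Psi_cor : forall (n : nat) (x : X n), (1 <= n)%N ->
  Psi n (tvec K n (corolla x)) = phi n x.

Lemma gl_nseq (s : tree X) j0 vs :
  gl s j0 (nseq j0.+1 Leaf ++ vs) = nseq j0 Leaf ++ s :: vs.
Proof. elim: j0 => [|j0 IH] //=; rewrite subn1 /=; congr (_ :: _); exact: IH. Qed.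

Let Q (s : tree X) := forall d, inT d s -> Psi d (tvec K d s) = castA d (G s).

Lemma Psi_list c vs j0 d : foldr (fun s acc => Q s /\ acc) True vs ->
  all (@wf X) vs -> (j0 + size vs = (tag c).+1)%N ->
  inT d (Node c (nseq j0 Leaf ++ vs)) ->
  Psi d (tvec K d (Node c (nseq j0 Leaf ++ vs))) = castA d (comb j0 (map G' vs) (base c)).
Proof.
elim: vs j0 d => [|s vs IHl] j0 d.
  move=> _ _; rewrite addn0 cats0 => -> /=.
  case: c => k x /= /and3P [/andP [/andP [Hk _] _] _ /eqP].
  have := leaves_nseq k.+1 [::]; rewrite cats0 /= addn0 => -> [<-].
  rewrite Psi_cor //; by rewrite /base castA_existT.
move=> [IHs IHvs] /andP [ws wvs] Hsz Hin.
case: s IHs ws Hin Hsz => [|c' ch'] IHs ws Hin Hsz.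
  have e : nseq j0 Leaf ++ Leaf :: vs = nseq j0.+1 Leaf ++ vs.
    by elim: (j0) => //= j ->.
  rewrite e IHl //; [by move: Hsz => /=; lia | by rewrite -e].
set s := Node c' ch'.
move: Hin => /and3P [/andP [/andP [Hc Hs] wall] _ /eqP Hl].
have hs : inT (leaves s).-1 s.
  rewrite /inT ws /=; have := leaves_pos ws; rewrite /= => H; by rewrite prednK.
set P' := Node c (nseq j0.+1 Leaf ++ vs).
have hP : inT (leaves P').-1 P'.
  apply/and3P; split.
  - apply/andP; split; [apply/andP; split; [exact: Hc|] |].
    + rewrite size_cat size_nseq; apply/eqP; move: Hsz => /=; lia.
    + by rewrite all_cat all_nseq orbT /=.
  - by [].
  - by rewrite /P' leaves_node leaves_nseq.
have ed : d = ((leaves s).-1 + (leaves P').-1)%N.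
  move: Hl; rewrite -/s /P' !(leaves_node c) !leaves_nseq map_cons sumn_cons1.
  have := leaves_pos ws; rewrite -/s; lia.
subst d.
have -> : Node c (nseq j0 Leaf ++ s :: vs) = graft s j0 P'.
  by rewrite graft_node gl_nseq.
have Hle : (j0 <= (leaves P').-1)%N by rewrite /P' leaves_node leaves_nseq; lia.
have := Psi_hom _ _ _ (exist _ s hs) (exist _ P' hP) Hle; rewrite /= => ->.
rewrite -(tvec_in K hs) -(tvec_in K hP) IHs // IHl //.
symmetry; apply: castA_sop; first exact: (inT_tag _ _ hs).
have := inT_tag _ _ hP; rewrite /P' GE comb_nones => h; exact: h.
by move: Hsz => /=; lia.
Qed.

Lemma Psi_G s : Q s.
Proof.
elim/tree_ind2: s => [|c ch IH] d; first by rewrite /inT andbF.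
move=> Hin; have := Hin; move=> /and3P [/andP [/andP [Hc /eqP Hs] ach] _ _].
have := Psi_list c ch 0 d IH ach; rewrite /= => ->; rewrite ?Hs //.
Qed.

Lemma Psi_Phi n v : Psi n v = Phi n v.
Proof.
apply: lin_basis_eq; [exact: Psi_lin | exact: Phi_lin |] => s.
rewrite -[<< s >>]/(basis s) Phi_basis -(tvecE K); apply: Psi_G; exact: valP.
Qed.

End Unique.

End Free.

Lemma Xone_tag (c : colour Xone) : tag c = 1%N.
Proof.
case: c => k x /=; move: x; rewrite /Xone.
by case: eqP => // _ [].
Qed.

Lemma wf_binary (t : tree Xone) : wf t = binary t.
Proof.
elim/tree_ind2: t => [|c ch IH] //=.
rewrite Xone_tag /=; congr andb.
elim: ch IH => [|s ch IHl] //= [IHs IHch].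
by rewrite IHs IHl.
Qed.

Theorem mainTheorem16 (K : fieldType) (X : nat -> choiceType) :
  (* K[T_{oo,X}] with grafting is a grafting algebra *)
  grafting_algebra (graftKT K X)
  /\
  (* ... and it is free on X *)
  (forall (A : nat -> lmodType K) (op : bullet A),
     grafting_algebra op ->
     forall phi : forall n : nat, X n -> A n,
     exists Phi : forall n : nat, KT K X n -> A n,
       ((forall n, is_linear (Phi n)) /\
        (forall (n m i : nat) (t : T X n) (w : T X m), (i <= m)%N ->
           Phi (n + m)%N (tvec K (n + m)%N (graft (val t) i (val w)))
           = op n m i (Phi n (basis t)) (Phi m (basis w))) /\
        (forall (n : nat) (x : X n), (1 <= n)%N ->
           Phi n (tvec K n (corolla x)) = phi n x))
       /\
       (forall Psi : forall n : nat, KT K X n -> A n,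
          (forall n, is_linear (Psi n)) ->
          (forall (n m i : nat) (t : T X n) (w : T X m), (i <= m)%N ->
             Psi (n + m)%N (tvec K (n + m)%N (graft (val t) i (val w)))
             = op n m i (Psi n (basis t)) (Psi m (basis w))) ->
          (forall (n : nat) (x : X n), (1 <= n)%N ->
             Psi n (tvec K n (corolla x)) = phi n x) ->
          forall (n : nat) (v : KT K X n), Psi n v = Phi n v))
  /\
  (* with one generator of degree 1, the basis trees are exactly the
     planar binary rooted trees *)
  (forall (n : nat) (t : tree Xone),
     inT n t = [&& binary t, isnode t & leaves t == n.+1]).
Proof.
split; first exact: KT_grafting_algebra.
split.
  move=> A op [[_ Hpre] Hgr] phi.
  exists (Phi K X A op phi); split.
    split; first exact: Phi_lin.
    split; first exact: Phi_hom.
    exact: Phi_corolla.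
  move=> Psi Hl Hh Hc n v.
  exact: Psi_Phi Hl Hh Hc n v.
by move=> n t; rewrite /inT wf_binary.
Qed.
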